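(* Let $\theta$ be a discrete valuation on Johnstone's dcpo $\mathcal J$ (with the Scott topology) with total mass $\theta(\mathcal J)=1-r$, where $r>0$. Then $\theta+r\mu$ is not a minimal valuation, where $\mu(U)=1$ for non-empty Scott-open $U$ and $\mu(\emptyset)=0$.
   Context: Johnstone's dcpo: $\mathcal J=\mathbb N\times(\mathbb N\cup\{\infty\})$ ordered by $(a,b)\le(c,d)$ iff either ($a=c$ and $b\le d$) or ($d=\infty$ and $b\le c$). A valuation on a space $X$ is a strict, monotone, modular map $\mathcal OX\to[0,\infty]$; it is continuous if it preserves directed suprema of opens. Continuous valuations are ordered pointwise, forming a dcpo $\mathcal VX$ with pointwise directed suprema. A simple valuation is a finite sum $\sum_{i=1}^n r_i\delta_{x_i}$ ($r_i\in[0,\infty)$, $\delta_x$ the Dirac valuation); a discrete valuation is a countable sum $\sum_{i=1}^\infty r_i\delta_{x_i}$ (supremum of its partial sums). The minimal valuations are the elements of the smallest subset of $\mathcal VX$ containing the simple valuations and closed under directed suprema. *)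

(* Defs.v *)
From mathcomp Require Import all_boot all_order all_algebra.
From mathcomp Require Import all_classical all_reals ereal.
Set Implicit Arguments. Unset Strict Implicit. Unset Printing Implicit Defensive.
Import Order.TTheory GRing.Theory Num.Theory.
Local Open Scope classical_set_scope.
Local Open Scope ring_scope.
Local Open Scope ereal_scope.

(* N ∪ {∞} is encoded as option nat, with None = ∞. *)
Definition le_ni (b d : option nat) : Prop :=
  match b, d with
  | _, None => True
  | None, Some _ => False
  | Some b, Some d => (b <= d)%N
  end.

Definition J := (nat * option nat)%type.

Definition leJ (p q : J) : Prop :=
  (p.1 = q.1 /\ le_ni p.2 q.2) \/ (q.2 = None /\ le_ni p.2 (Some q.1)).

Definition directed {T : Type} (le : T -> T -> Prop) (D : set T) : Prop :=
  (exists x, D x) /\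
  forall x y, D x -> D y -> exists z, [/\ D z, le x z & le y z].

Definition is_sup {T : Type} (le : T -> T -> Prop) (D : set T) (s : T) : Prop :=
  (forall d, D d -> le d s) /\
  (forall u, (forall d, D d -> le d u) -> le s u).

Definition scott_open {T : Type} (le : T -> T -> Prop) (U : set T) : Prop :=
  (forall x y, U x -> le x y -> U y) /\
  (forall D s, directed le D -> is_sup le D s -> U s -> exists d, D d /\ U d).

(* Encoding convention: a map O X -> [0,∞] is represented by a function
   set T -> \bar R which is 0 on non-open sets ("normalized"), so that
   elements of V X correspond bijectively to such functions. *)
Section Valuations.
Context {R : realType} {T : Type} (isopen : set T -> Prop).

Definition normalized (v : set T -> \bar R) : Prop :=
  forall U, ~ isopen U -> v U = 0.

Definition is_valuation (v : set T -> \bar R) : Prop :=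
  [/\ normalized v,
      (forall U, isopen U -> 0 <= v U),
      v set0 = 0,
      (forall U V, isopen U -> isopen V -> U `<=` V -> v U <= v V) &
      (forall U V, isopen U -> isopen V ->
         v U + v V = v (U `|` V) + v (U `&` V))].

Definition is_cvaluation (v : set T -> \bar R) : Prop :=
  is_valuation v /\
  forall F : set (set T), (forall U, F U -> isopen U) ->
    directed (fun U V => U `<=` V) F ->
    v (\bigcup_(U in F) U) = ereal_sup [set v U | U in F].

Definition leV (v w : set T -> \bar R) : Prop :=
  forall U, isopen U -> v U <= w U.

Definition dsup (D : set (set T -> \bar R)) : set T -> \bar R :=
  fun U => ereal_sup [set d U | d in D].

Definition delta_pt (x : T) (U : set T) : \bar R :=
  if `[< U x >] then 1 else 0.

Definition simple_val (v : set T -> \bar R) : Prop :=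
  exists (n : nat) (r : nat -> R) (x : nat -> T),
    (forall i, (0 <= r i)%R) /\
    forall U, v U = if `[< isopen U >]
                    then \sum_(i < n) (r i)%:E * delta_pt (x i) U
                    else 0.

Definition discrete_val (v : set T -> \bar R) : Prop :=
  is_cvaluation v /\
  exists (r : nat -> R) (x : nat -> T),
    (forall i, (0 <= r i)%R) /\
    forall U, isopen U ->
      v U = ereal_sup [set \sum_(i < n) (r i)%:E * delta_pt (x i) U | n in [set: nat]].

Definition minimal_val (v : set T -> \bar R) : Prop :=
  forall S : set (set T -> \bar R),
    (forall w, S w -> is_cvaluation w) ->
    (forall w, simple_val w -> S w) ->
    (forall D, D `<=` S -> directed leV D -> S (dsup D)) ->
    S v.

Definition mu_val : set T -> \bar R :=
  fun U => if `[< isopen U >] then (if `[< exists x, U x >] then 1 else 0) else 0.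

End Valuations.

(* Main.v *)
Require Import Defs.
From mathcomp Require Import all_boot all_order all_algebra.
From mathcomp Require Import all_classical all_reals ereal.
From mathcomp Require Import zify.
From Stdlib Require Import Lia.
From mathcomp Require Import lra.
Set Implicit Arguments. Unset Strict Implicit. Unset Printing Implicit Defensive.
Import Order.TTheory GRing.Theory Num.Theory.
Local Open Scope classical_set_scope.

Section JLemmas.

Lemma le_ni_trans a b c : le_ni a b -> le_ni b c -> le_ni a c.
Proof.
by case: a => [a|]; case: b => [b|]; case: c => [c|] //=; apply: leq_trans.
Qed.

Lemma leJ_trans p q s : leJ p q -> leJ q s -> leJ p s.
Proof.
case: p => a b; case: q => c d; case: s => e f; rewrite /leJ /=.
move=> [[E1 Hbd]|[Ed Hb]] [[E2 Hdf]|[Ef Hd]].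
- by left; split; [exact: etrans E1 E2|exact: le_ni_trans Hdf].
- by right; split => //; exact: le_ni_trans Hbd Hd.
- by right; rewrite -E2; split => //; rewrite Ed in Hdf; case: f Hdf.
- by rewrite Ed in Hd.
Qed.

Definition G (C : nat -> Prop) (f : nat -> nat) : set J :=
  [set p | C p.1 /\ le_ni (Some (f p.1)) p.2].

Lemma col_lemma (D : set J) : directed leJ D ->
  (forall d, D d -> d.2 <> None) -> exists a0, forall d, D d -> d.1 = a0.
Proof.
move=> [[x0 Dx0] Hdir] Hfin; exists x0.1 => d Dd.
have [z [Dz Hxz Hdz]] := Hdir _ _ Dx0 Dd.
have Hz := Hfin _ Dz.
case: Hxz => [[-> _]|[Hz' _]] //; case: Hdz => [[-> _]|[Hz'' _]] //.
Qed.

Lemma supL (D : set J) s k : directed leJ D -> is_sup leJ D s ->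
  le_ni (Some k) s.2 -> exists d, D d /\ le_ni (Some k) d.2.
Proof.
move=> Hdir [Hub Hlub] Hk.
apply: contrapT => Hno.
have Hlt : forall d, D d -> exists b, d.2 = Some b /\ (b < k)%N.
  move=> d Dd; case Ed: d.2 => [b|].
  - exists b; split => //; rewrite ltnNge; apply/negP => Hb.
    by apply: Hno; exists d; rewrite Ed.
  - by exfalso; apply: Hno; exists d; rewrite Ed.
have [a0 Ha0] : exists a0, forall d, D d -> d.1 = a0.
  apply: col_lemma => // d Dd; have [b [-> _]] := Hlt d Dd; done.
have Hu : forall d, D d -> leJ d (a0, Some k.-1).
  move=> d Dd; left; split; first exact: Ha0.
  have [b [-> Hb]] := Hlt d Dd; rewrite /=; by rewrite -ltnS prednK // (leq_ltn_trans _ Hb).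
have := Hlub _ Hu; rewrite /leJ /= => -[[_ Hs]|[//]].
move: Hk Hs; case: s.2 => [b|] //= Hkb Hb.
have Hk0 : (0 < k)%N.
  have [[x Dx] _] := Hdir; have [b' [_ Hb']] := Hlt x Dx; exact: leq_ltn_trans Hb'.
have := leq_trans Hkb Hb; by rewrite -ltnS prednK // ltnn.
Qed.

Lemma fin_sup_col (D : set J) s b d : is_sup leJ D s -> s.2 = Some b -> D d -> d.1 = s.1.
Proof.
move=> [Hub _] Hs Dd; case: (Hub d Dd) => [[-> _]|[]] //; by rewrite Hs.
Qed.

Lemma supL' (D : set J) s : directed leJ D -> is_sup leJ D s -> s.2 = None ->
  D s \/ (forall k, exists d, [/\ D d, d.1 = s.1 & le_ni (Some k) d.2]).
Proof.
move=> Hdir [Hub Hlub] Hs.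
case: (pselect (exists d, D d /\ d.2 = None)) => [[d [Dd Hd]]|Hno].
  left; case: (Hub d Dd) => [[H1 _]|[_ H2]].
  - suff <- : d = s by [].
    by rewrite [d]surjective_pairing [s]surjective_pairing H1 Hd Hs.
  - by move: H2; rewrite Hd.
have Hfin : forall d, D d -> d.2 <> None by move=> d Dd Hd; apply: Hno; exists d.
have [a0 Ha0] := col_lemma Hdir Hfin.
case: (pselect (a0 = s.1)) => [Ea|Na].
  right => k.
  have Hk : le_ni (Some k) s.2 by rewrite Hs.
  have [d [Dd Hd]] := supL Hdir (conj Hub Hlub) Hk.
  by exists d; split => //; rewrite Ha0.
exfalso.
have Hu : forall d, D d -> leJ d (a0, Some s.1).
  move=> d Dd; left; split; first exact: Ha0.
  case: (Hub d Dd) => [[H1 _]|[_ H2]] //; exfalso; apply: Na; by rewrite -H1 Ha0.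
by have := Hlub _ Hu; rewrite /leJ /= Hs => -[[_ //]|[//]].
Qed.

Lemma open_G C f : (forall c c', C c -> (f c <= c')%N -> C c') -> scott_open leJ (G C f).
Proof.
move=> HC; split.
  move=> [a b] [c d] [/= Ca Hb] [[/= <- Hbd]|[/= -> Hbc]].
  - by split => //; exact: le_ni_trans Hbd.
  - split => //=; apply: HC Ca _; case: b Hb Hbc => //= b; apply: leq_trans.
move=> D s Hdir Hsup [/= Cs Hs].
case Es: s.2 => [b|].
  have [d [Dd Hd]] := supL Hdir Hsup Hs.
  by exists d; split => //; rewrite /G /= (fin_sup_col Hsup Es Dd).
case: (supL' Hdir Hsup Es) => [Ds|Hk]; first by exists s.
have [d [Dd H1 H2]] := Hk (f s.1); by exists d; split => //; rewrite /G /= H1.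
Qed.

Lemma open_setT : scott_open leJ setT.
Proof. by split => // D s [[x Dx] _] _ _; exists x. Qed.

Lemma open_setU (U V : set J) : scott_open leJ U -> scott_open leJ V -> scott_open leJ (U `|` V).
Proof.
move=> [uU sU] [uV sV]; split.
  by move=> x y [Ux|Vx] Hxy; [left; exact: uU Hxy|right; exact: uV Hxy].
move=> D s Hd Hs [Us|Vs].
  by have [d [Dd Ud]] := sU D s Hd Hs Us; exists d; split => //; left.
by have [d [Dd Vd]] := sV D s Hd Hs Vs; exists d; split => //; right.
Qed.

Lemma open_setI (U V : set J) : scott_open leJ U -> scott_open leJ V -> scott_open leJ (U `&` V).
Proof.
move=> [uU sU] [uV sV]; split.
  by move=> x y [Ux Vx] Hxy; split; [exact: uU Hxy|exact: uV Hxy].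
move=> D s Hd Hs [Us Vs].
have [d1 [Dd1 Ud1]] := sU D s Hd Hs Us.
have [d2 [Dd2 Vd2]] := sV D s Hd Hs Vs.
have [z [Dz H1 H2]] := Hd.2 _ _ Dd1 Dd2.
by exists z; split => //; split; [exact: uU H1|exact: uV H2].
Qed.

Lemma open_bigcup (F : set (set J)) : (forall U, F U -> scott_open leJ U) ->
  scott_open leJ (\bigcup_(U in F) U).
Proof.
move=> HF; split.
  by move=> x y [U FU Ux] Hxy; exists U => //; exact: (HF U FU).1 _ _ Ux Hxy.
move=> D s Hd Hs [U FU Us].
have [d [Dd Ud]] := (HF U FU).2 D s Hd Hs Us; by exists d; split => //; exists U.
Qed.

End JLemmas.

Section Sup.
Local Open Scope ring_scope.
Local Open Scope ereal_scope.
Context {R : realType}.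

Lemma fin_between (x : \bar R) (s : R) : 0 <= x -> x <= s%:E -> x \is a fin_num.
Proof. by move=> x0 xs; rewrite ge0_fin_numE // (le_lt_trans xs) // ltry. Qed.

Lemma add_sup_le {X : Type} (A : set X) (f g : X -> \bar R) (S : \bar R) :
  (forall x, A x -> 0 <= f x) -> (forall x, A x -> 0 <= g x) -> (exists x, A x) ->
  (forall x y, A x -> A y -> f x + g y <= S) ->
  ereal_sup (f @` A) + ereal_sup (g @` A) <= S.
Proof.
move=> f0 g0 [x0 Ax0] H.
case ES: S => [s| |]; last 2 first.
- exact: leey.
- have := le_trans (adde_ge0 (f0 _ Ax0) (g0 _ Ax0)) (H _ _ Ax0 Ax0).
  by rewrite ES leeNy_eq.
have gfin : forall y, A y -> g y \is a fin_num.
  move=> y Ay; apply: (@fin_between _ s (g0 _ Ay)).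
  by rewrite -ES; apply: le_trans (H _ _ Ax0 Ay); exact: leeDr (f0 _ Ax0).
have Hf : forall y, A y -> ereal_sup (f @` A) + g y <= s%:E.
  move=> y Ay; rewrite -leeBrDr ?gfin //; apply/ereal_supP => _ [x Ax <-].
  by rewrite leeBrDr ?gfin // -ES; exact: H.
have supf0 : 0 <= ereal_sup (f @` A).
  by apply: le_trans (f0 _ Ax0) _; apply: ereal_sup_ubound; exists x0.
have supffin : ereal_sup (f @` A) \is a fin_num.
  apply: (@fin_between _ s supf0); apply: le_trans (Hf _ Ax0).
  exact: leeDl (g0 _ Ax0).
rewrite -leeBrDl //; apply/ereal_supP => _ [y Ay <-].
by rewrite leeBrDl //; exact: Hf.
Qed.

Lemma sup_add {X : Type} (A : set X) (f g : X -> \bar R) :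
  (forall x, A x -> 0 <= f x) -> (forall x, A x -> 0 <= g x) -> (exists x, A x) ->
  (forall x y, A x -> A y -> exists z, [/\ A z, f x <= f z, f y <= f z, g x <= g z & g y <= g z]) ->
  ereal_sup [set f x + g x | x in A] = ereal_sup (f @` A) + ereal_sup (g @` A).
Proof.
move=> f0 g0 ne Hd; apply/le_anti/andP; split.
  apply/ereal_supP => _ [x Ax <-]; apply: leeD; apply: ereal_sup_ubound; by exists x.
apply: add_sup_le => // x y Ax Ay.
have [z [Az h1 h2 h3 h4]] := Hd x y Ax Ay.
apply: le_trans (leeD h1 h4) _; apply: ereal_sup_ubound; by exists z.
Qed.

End Sup.

Section Dsup.
Local Open Scope ring_scope.
Local Open Scope ereal_scope.
Context {R : realType} {T : Type} (isopen : set T -> Prop).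
Hypothesis hU : forall U V, isopen U -> isopen V -> isopen (U `|` V).
Hypothesis hI : forall U V, isopen U -> isopen V -> isopen (U `&` V).

Lemma dsup_cval (D : set (set T -> \bar R)) :
  (forall d, D d -> is_cvaluation isopen d) -> directed (leV isopen) D ->
  is_cvaluation isopen (dsup D).
Proof.
move=> HD Hdir; have [[d0 Dd0] Hd2] := Hdir.
have dsup0 : forall U, (forall d, D d -> d U = 0) -> dsup D U = 0.
  move=> U H; apply/le_anti/andP; split.
    by apply/ereal_supP => _ [d Dd <-]; rewrite H.
  by apply: ereal_sup_ubound; exists d0 => //; rewrite H.
have ub : forall d U, D d -> d U <= dsup D U.
  by move=> d U Dd; apply: ereal_sup_ubound; exists d.
split; first split.
- by move=> U nU; apply: dsup0 => d Dd; have [[H _ _ _ _] _] := HD d Dd; exact: H.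
- move=> U oU; apply: le_trans (ub _ _ Dd0).
  by have [[_ H _ _ _] _] := HD d0 Dd0; exact: H.
- by apply: dsup0 => d Dd; have [[_ _ H _ _] _] := HD d Dd.
- move=> U V oU oV UV; apply/ereal_supP => _ [d Dd <-].
  apply: le_trans (ub _ _ Dd); by have [[_ _ _ H _] _] := HD d Dd; exact: H.
- move=> U V oU oV.
  have sa : forall A B, isopen A -> isopen B ->
      ereal_sup [set d A + d B | d in D] = dsup D A + dsup D B.
    move=> A B oA oB; apply: sup_add; first 3 last.
    + move=> x y Dx Dy; have [z [Dz xz yz]] := Hd2 x y Dx Dy.
      by exists z; split => //; [exact: xz|exact: yz|exact: xz|exact: yz].
    + by move=> d Dd; have [[_ H _ _ _] _] := HD d Dd; exact: H.
    + by move=> d Dd; have [[_ H _ _ _] _] := HD d Dd; exact: H.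
    + by exists d0.
  have oUV := hU oU oV; have oUIV := hI oU oV.
  rewrite -(sa U V) // -(sa (U `|` V) (U `&` V)) //.
  congr ereal_sup; apply: eq_imagel => d Dd.
  by have [[_ _ _ _ H] _] := HD d Dd; exact: H.
move=> F oF dF.
have Hc : forall d, D d -> d (\bigcup_(U in F) U) = ereal_sup [set d U | U in F].
  by move=> d Dd; have [_ H] := HD d Dd; exact: H.
apply/le_anti/andP; split.
  apply/ereal_supP => _ [d Dd <-]; rewrite Hc //.
  apply/ereal_supP => _ [U FU <-]; apply: le_trans (ub _ _ Dd) _.
  by apply: ereal_sup_ubound; exists U.
apply/ereal_supP => _ [U FU <-]; apply/ereal_supP => _ [d Dd <-].
apply: le_trans (ub _ _ Dd); rewrite Hc //; apply: ereal_sup_ubound; by exists U.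
Qed.

End Dsup.

Section Simple.
Local Open Scope ring_scope.
Context {R : realType} {T : Type} (isopen : set T -> Prop).
Hypothesis hU : forall U V, isopen U -> isopen V -> isopen (U `|` V).
Hypothesis hI : forall U V, isopen U -> isopen V -> isopen (U `&` V).
Hypothesis hB : forall F : set (set T), (forall U, F U -> isopen U) -> isopen (\bigcup_(U in F) U).

Definition ind (U : set T) (x : T) : R := if `[< U x >] then 1 else 0.

Definition sr (n : nat) (r : nat -> R) (x : nat -> T) (U : set T) : R :=
  \sum_(i < n) r i * ind U (x i).

Lemma ind_ge0 U x : 0 <= ind U x.
Proof. by rewrite /ind; case: ifP. Qed.

Lemma ind_le U V x : U `<=` V -> ind U x <= ind V x.
Proof.
move=> UV; rewrite /ind; case: (pselect (U x)) => Ux.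
  by rewrite (asboolT Ux) (asboolT (UV _ Ux)).
by rewrite (asboolF Ux); case: ifP.
Qed.

Lemma ind_mod U V x : ind U x + ind V x = ind (U `|` V) x + ind (U `&` V) x.
Proof.
rewrite /ind; case: (asboolP (U x)) => a; case: (asboolP (V x)) => b;
  case: (asboolP ((U `|` V) x)) => c; case: (asboolP ((U `&` V) x)) => d;
  rewrite ?addr0 ?add0r //; exfalso; move: c d; rewrite /setU /setI /=; tauto.
Qed.

Lemma delta_E (a : R) x U : ((a%:E * delta_pt x U) = (a * ind U x)%:E)%E.
Proof. by rewrite /delta_pt /ind; case: ifP => _; rewrite ?mule1 ?mule0 ?mulr1 ?mulr0. Qed.

Lemma simple_E (v : set T -> \bar R) n (r : nat -> R) (x : nat -> T) :
  (forall U, v U = if `[< isopen U >] then (\sum_(i < n) (r i)%:E * delta_pt (x i) U)%E else 0%E) ->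
  forall U, isopen U -> v U = (sr n r x U)%:E.
Proof.
move=> Hv U oU; rewrite Hv (asboolT oU) /sr -sumEFin.
by apply: eq_bigr => i _; rewrite delta_E.
Qed.

Lemma sr_ge0 n r x U : (forall i, 0 <= r i) -> 0 <= sr n r x U.
Proof. by move=> r0; apply: sumr_ge0 => i _; apply: mulr_ge0 => //; exact: ind_ge0. Qed.

Lemma sr_le n r x U V : (forall i, 0 <= r i) -> U `<=` V -> sr n r x U <= sr n r x V.
Proof. by move=> r0 UV; apply: ler_sum => i _; apply: ler_wpM2l => //; exact: ind_le. Qed.

Lemma simple_cval (v : set T -> \bar R) : simple_val isopen v -> is_cvaluation isopen v.
Proof.
move=> [n [r [x [r0 Hv]]]].
have HE := simple_E Hv.
split; first split.
- by move=> U nU; rewrite Hv (asboolF nU).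
- by move=> U oU; rewrite HE // lee_fin; exact: sr_ge0.
- rewrite Hv; case: ifP => // _; apply: big1 => i _.
  by rewrite /delta_pt asboolF ?mule0.
- by move=> U V oU oV UV; rewrite !HE // lee_fin; exact: sr_le.
- move=> U V oU oV; have oUV := hU oU oV; have oUIV := hI oU oV.
  rewrite !HE //; rewrite -!EFinD; congr EFin.
  rewrite /sr -!big_split /=; apply: eq_bigr => i _; by rewrite -!mulrDr ind_mod.
move=> F oF [[U0 FU0] dF].
have oB := hB oF.
have key : forall m, (m <= n)%N -> exists U, F U /\
    forall i, (i < m)%N -> (\bigcup_(U in F) U) (x i) -> U (x i).
  elim=> [|m IH] Hm; first by exists U0.
  have [U [FU HU]] := IH (ltnW Hm).
  case: (pselect ((\bigcup_(U in F) U) (x m))) => [[U' FU' U'x]|Nx].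
    have [W [FW UW U'W]] := dF _ _ FU FU'.
    exists W; split => // i; rewrite ltnS leq_eqVlt => /orP [/eqP ->|lim] Bx; first exact: U'W.
    exact/UW/HU.
  exists U; split => // i; rewrite ltnS leq_eqVlt => /orP [/eqP ->|lim] Bx; first by [].
  exact: HU.
apply/le_anti/andP; split; last first.
  apply/ereal_supP => _ [U FU <-]; rewrite !HE //; first by rewrite lee_fin; apply: sr_le => // y Uy; exists U.
  exact: oF.
have [U [FU HU]] := key n (leqnn n).
apply: le_ereal_sup_tmp; exists (v U); first by exists U.
have oU := oF _ FU; rewrite !HE // lee_fin; apply: ler_sum => i _; apply: ler_wpM2l => //.
rewrite /ind; case: (pselect ((\bigcup_(U in F) U) (x i))) => Bx.
  by rewrite (asboolT Bx) (asboolT (HU _ (ltn_ord i) Bx)).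
by rewrite (asboolF Bx); case: ifP.
Qed.

End Simple.


Section JSets.

Definition Uset N := G (fun c => (N <= c)%N) (fun _ => N).
Definition Wset N0 k := G (fun _ => True) (fun c => if (c < N0)%N then 0%N else k).
Definition Zset P k := G (fun c => (c < P)%N \/ (k <= c)%N) (fun _ => k).

Lemma open_U N : scott_open leJ (Uset N).
Proof. by apply: open_G => c c' /= _; apply. Qed.

Lemma open_W N0 k : scott_open leJ (Wset N0 k).
Proof. by apply: open_G. Qed.

Lemma open_Z P k : scott_open leJ (Zset P k).
Proof. by apply: open_G => c c' _ /= H; right. Qed.

Lemma le_niS a a' b : le_ni (Some a) b -> (a' <= a)%N -> le_ni (Some a') b.
Proof. by case: b => //= b H1 H2; exact: leq_trans H2 H1. Qed.

Lemma U_dec N1 N2 : (N1 <= N2)%N -> Uset N2 `<=` Uset N1.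
Proof. by move=> H [a b] [/= H1 H2]; split; [exact: leq_trans H1|exact: le_niS H2 H]. Qed.

Lemma Z_dec P k1 k2 : (k1 <= k2)%N -> Zset P k2 `<=` Zset P k1.
Proof.
move=> H [a b] [/= [H1|H1] H2]; split => /=; last 2 first.
- by right; exact: leq_trans H1.
- exact: le_niS H2 H.
- by left.
- exact: le_niS H2 H.
Qed.

End JSets.

Lemma incl_I P N N0 N' k : (P <= N)%N -> (N' <= k)%N ->
  Zset P k `&` (Wset N0 k `&` Uset N) `<=` Uset N'.
Proof.
move=> HP Hk [a b] [[/= Ha Hb] [_ [/= HN _]]]; split => /=.
- case: Ha => Ha; last exact: leq_trans Hk Ha.
  by exfalso; lia.
- exact: le_niS Hb Hk.
Qed.

Lemma incl_U P N N0 N' k : (P <= N')%N -> (N0 <= N)%N -> (N' <= k)%N ->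
  Zset P k `|` (Wset N0 k `&` Uset N) `<=` Zset N' k `|` Uset N'.
Proof.
move=> HP HN0 Hk [a b] [[/= [Ha|Ha] Hb]|[[_ /= Hw] [/= HN _]]].
- by left; split => //=; left; exact: leq_trans Ha HP.
- by left; split => //=; right.
- have Hb : le_ni (Some k) b.
    by move: Hw; have -> : (a < N0)%N = false by apply/negbTE; rewrite -leqNgt (leq_trans HN0 HN).
  case: (ltnP a N') => Ha.
  + by left; split => //=; left.
  + by right; split => //=; exact: le_niS Hb Hk.
Qed.

Section Main.
Context {R : realType}.
Local Open Scope ring_scope.
Local Notation isop := (scott_open leJ).

Definition Tight (w : set J -> \bar R) := forall e : R, 0 < e ->
  exists N0, forall k, (w setT <= w (Wset N0 k) + e%:E)%E.
Definition tau0 (w : set J -> \bar R) := forall e : R, 0 < e ->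
  exists N, (w (Uset N) <= e%:E)%E.
Definition Cl (w : set J -> \bar R) :=
  is_cvaluation isop w /\ (w setT = +oo%E \/ (Tight w /\ tau0 w)).

Lemma ind1 (U : set J) x : U x -> ind (R:=R) U x = 1.
Proof. by move=> Ux; rewrite /ind (asboolT Ux). Qed.
Lemma ind0 (U : set J) x : ~ U x -> ind (R:=R) U x = 0.
Proof. by move=> Ux; rewrite /ind (asboolF Ux). Qed.

Lemma simple_Cl (w : set J -> \bar R) : simple_val isop w -> Cl w.
Proof.
move=> Hs; split.
  apply: (@simple_cval R J isop) => //; [exact: open_setU|exact: open_setI|exact: open_bigcup].
right; move: Hs => [n [r [x [r0 Hv]]]].
have HE := simple_E Hv.
have [N0 HN0'] : exists N0, forall i, (i < n)%N -> ((x i).1 < N0)%N.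
  elim: (n) => [|m [N IH]]; first by exists 0%N.
  exists (maxn N (x m).1.+1) => i; rewrite ltnS leq_eqVlt => /orP [/eqP ->|Hi].
    by rewrite leq_max leqnn orbT.
  by rewrite leq_max (IH _ Hi).
have HN0 : forall i : 'I_n, ((x i).1 < N0)%N by move=> i; exact: HN0'.
split.
- move=> e e0; exists N0 => k; have oW := open_W N0 k; have oT := open_setT.
  rewrite !HE //.
  have -> : sr n r x (Wset N0 k) = sr n r x setT.
    apply: eq_bigr => i _; rewrite !ind1 //.
    rewrite /Wset /G /=; split => //; rewrite (HN0 i); by case: (x i).2.
  by rewrite -EFinD lee_fin lerDl ltW.
- move=> e e0; exists N0; have oU := open_U N0; rewrite HE //.
  have -> : sr n r x (Uset N0) = 0.
    apply: big1 => i _; rewrite ind0 ?mulr0 // /Uset /G => -[/= H _].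
    by have := leq_ltn_trans H (HN0 i); rewrite ltnn.
  by rewrite lee_fin ltW.
Qed.

Lemma val_real (w : set J -> \bar R) (m : R) U : is_valuation isop w ->
  (w setT <= m%:E)%E -> isop U -> exists a : R, [/\ w U = a%:E, 0 <= a & a <= m].
Proof.
move=> [_ w0 _ wm _] wT oU.
have h0 := w0 U oU; have h1 : (w U <= m%:E)%E.
  by apply: le_trans wT; apply: wm => //; exact: open_setT.
have f := fin_between h0 h1.
by exists (fine (w U)); rewrite fineK //; split => //; rewrite -lee_fin fineK.
Qed.

Lemma closure_Cl (D : set (set J -> \bar R)) : D `<=` Cl -> directed (leV isop) D ->
  Cl (dsup D).
Proof.
move=> DCl Hdir.
have cvD : forall d, D d -> is_cvaluation isop d by move=> d /DCl [].
have cv : is_cvaluation isop (dsup D).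
  by apply: (@dsup_cval R J isop) => //; [exact: open_setU|exact: open_setI].
split => //.
set v := dsup D.
case: (eqVneq (v setT) +oo%E) => [->|Hfin]; [by left | right].
have [[_ v0 _ vmon _] _] := cv.
have vT0 : (0 <= v setT)%E := v0 _ open_setT.
set m := fine (v setT).
have EvT : v setT = m%:E by rewrite /m fineK // ge0_fin_numE // ltey.
have ub : forall d U, D d -> (d U <= v U)%E by move=> d U Dd; apply: ereal_sup_ubound; exists d.
have dm : forall d, D d -> (d setT <= m%:E)%E by move=> d Dd; rewrite -EvT; exact: ub.
have dTT : forall d, D d -> Tight d /\ tau0 d.
  move=> d Dd; have [_ [H|//]] := DCl d Dd.
  by have := dm d Dd; rewrite H leye_eq.
have dval : forall d, D d -> is_valuation isop d by move=> d /cvD [].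
have real : forall d U, D d -> isop U -> exists a : R, [/\ d U = a%:E, 0 <= a & a <= m].
  by move=> d U Dd oU; exact: val_real (dval d Dd) (dm d Dd) oU.
have vreal : forall U, isop U -> exists a : R, [/\ v U = a%:E, 0 <= a & a <= m].
  have vT : (v setT <= m%:E)%E by rewrite EvT.
  by move=> U oU; exact: val_real cv.1 vT oU.
have sup_gt : forall U (a : R), (a%:E < v U)%E -> exists d, D d /\ (a%:E < d U)%E.
  by move=> U a /ereal_sup_gt [_ [d Dd <-] H]; exists d.
have [_ dir2] := Hdir.
split.
- move=> e e0.
  have [d [Dd Hd]] : exists d, D d /\ ((m - e/2)%:E < d setT)%E.
    by apply: sup_gt; rewrite EvT lte_fin; lra.
  have [N0 HN0] := (dTT d Dd).1 (e/2) (ltac:(lra)).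
  exists N0 => k.
  have oW := open_W N0 k.
  have [a [Ea _ _]] := real d _ Dd oW.
  have [b [Eb _ _]] := real d _ Dd open_setT.
  have [c [Ec _ _]] := vreal _ oW.
  have := HN0 k; have := ub d _ Dd; rewrite Ea Eb Ec EvT in Hd *.
  rewrite -EFinD !lee_fin lte_fin in Hd * => h1 h2.
  have := h1 (Wset N0 k); rewrite Ea Ec lee_fin => h3.
  lra.
- apply: contrapT => Hn.
  have [t [t0 Ht]] : exists t : R, 0 < t /\ forall N, (t%:E < v (Uset N))%E.
    apply: contrapT => H; apply: Hn => e e0; apply: contrapT => H2; apply: H.
    exists e; split => // N; rewrite ltNge; apply/negP => H3; apply: H2; by exists N.
  pose eps := t / 8.
  have eps0 : 0 < eps by rewrite /eps; lra.
  pose g (d : set J -> \bar R) (P : nat) := ereal_inf [set d (Zset P k) | k in [set: nat]].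
  pose Mx := ereal_sup [set g p.1 p.2 | p in [set p : (set J -> \bar R) * nat | D p.1]].
  have [[d0 Dd0] _] := Hdir.
  have gb : forall d P, D d -> (0 <= g d P)%E /\ (g d P <= m%:E)%E.
    move=> d P Dd; split.
      apply/ereal_infP => _ [k _ <-].
      by have [a [Ea a0 _]] := real d _ Dd (open_Z P k); rewrite Ea lee_fin.
    apply: ge_ereal_inf; exists (d (Zset P 0)); first by exists 0%N.
    by have [a [Ea _ am]] := real d _ Dd (open_Z P 0); rewrite Ea lee_fin.
  have Mx0 : (0 <= Mx)%E.
    apply: le_trans (gb d0 0%N Dd0).1 _; apply: ereal_sup_ubound; by exists (d0, 0%N).
  have Mxm : (Mx <= m%:E)%E.
    by apply/ereal_supP => _ [[d P] /= Dd <-]; exact: (gb d P Dd).2.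
  have [mx [Emx _ _]] : exists mx : R, [/\ Mx = mx%:E, 0 <= mx & mx <= m].
    have f := fin_between Mx0 Mxm.
    by exists (fine Mx); rewrite fineK //; split => //; rewrite -lee_fin fineK.
  have [[d1 P] /= Dd1 Hd1] : exists2 p : (set J -> \bar R) * nat, D p.1 & ((mx - eps)%:E < g p.1 p.2)%E.
    have : ((mx - eps)%:E < Mx)%E by rewrite Emx lte_fin; lra.
    by move=> /ereal_sup_gt [_ [p Dp <-] H]; exists p.
  have [d2 [Dd2 Hd2]] : exists d, D d /\ ((m - eps)%:E < d setT)%E.
    by apply: sup_gt; rewrite EvT lte_fin; lra.
  have [e [De le1 le2]] := dir2 _ _ Dd1 Dd2.
  have [N0 HN0] := (dTT e De).1 eps eps0.
  pose N := maxn N0 P.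
  have [d3 [Dd3 Hd3]] := sup_gt _ _ (Ht N).
  have [e2 [De2 le3 le4]] := dir2 _ _ De Dd3.
  have [N1 HN1] := (dTT e2 De2).2 eps eps0.
  pose N' := maxn N1 N.
  have key : forall k, (N' <= k)%N -> ((mx + 2 * eps)%:E <= e2 (Zset N' k))%E.
    move=> k Hk.
    set A := Zset P k. set W := Wset N0 k. set UN := Uset N. set B := W `&` UN.
    set Z := Zset N' k. set UN' := Uset N'.
    have oA : isop A by exact: open_Z.
    have oW : isop W by exact: open_W.
    have oUN : isop UN by exact: open_U.
    have oB : isop B by exact: open_setI.
    have oWU : isop (W `|` UN) by exact: open_setU.
    have oAB : isop (A `|` B) by exact: open_setU.
    have oAIB : isop (A `&` B) by exact: open_setI.
    have oZ : isop Z by exact: open_Z.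
    have oUN' : isop UN' by exact: open_U.
    have oZU : isop (Z `|` UN') by exact: open_setU.
    have oZI : isop (Z `&` UN') by exact: open_setI.
    have oU1 : isop (Uset N1) by exact: open_U.
    have [_ _ _ e2mon e2mod] := dval e2 De2.
    have i1 : ((mx - eps)%:E < e2 A)%E.
      apply: (lt_le_trans Hd1); apply: le_trans (le3 _ oA).
      apply: le_trans (le1 _ oA); apply: ereal_inf_lbound; by exists k.
    have i2 : ((m - eps)%:E <= e setT)%E.
      by apply: le_trans (le2 _ open_setT); exact: ltW.
    have i2' := HN0 k.
    have i2'' : (e W <= e2 W)%E := le3 _ oW.
    have i3 : (t%:E < e2 UN)%E := lt_le_trans Hd3 (le4 _ oUN).
    have i4 : (e2 (W `|` UN) <= m%:E)%E.
      apply: le_trans (dm _ De2); apply: e2mon => //; exact: open_setT.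
    have mod1 := e2mod _ _ oW oUN.
    have mod2 := e2mod _ _ oA oB.
    have mod3 := e2mod _ _ oZ oUN'.
    have i5 : (e2 (A `&` B) <= eps%:E)%E.
      apply: le_trans HN1; apply: e2mon => //.
      apply: subset_trans (U_dec (leq_maxl N1 N)).
      apply: incl_I; [exact: leq_maxr|exact: Hk].
    have i6 : (e2 (A `|` B) <= e2 (Z `|` UN'))%E.
      apply: e2mon => //; apply: incl_U.
      - exact: leq_trans (leq_maxr N0 P) (leq_maxr N1 N).
      - exact: leq_maxl.
      - exact: Hk.
    have i7 : (e2 UN' <= eps%:E)%E.
      apply: le_trans HN1; apply: e2mon => //; exact: U_dec (leq_maxl N1 N).
    have [xA [EA _ _]] := real e2 _ De2 oA.
    have [xW [EW _ _]] := real e2 _ De2 oW.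
    have [xU [EU _ _]] := real e2 _ De2 oUN.
    have [xB [EB _ _]] := real e2 _ De2 oB.
    have [xWU [EWU _ _]] := real e2 _ De2 oWU.
    have [xAB [EAB _ _]] := real e2 _ De2 oAB.
    have [xAIB [EAIB _ _]] := real e2 _ De2 oAIB.
    have [xZ [EZ _ _]] := real e2 _ De2 oZ.
    have [xU' [EU' _ _]] := real e2 _ De2 oUN'.
    have [xZU [EZU _ _]] := real e2 _ De2 oZU.
    have [xZI [EZI xZI0 _]] := real e2 _ De2 oZI.
    have [yT [EyT _ _]] := real e _ De open_setT.
    have [yW [EyW _ _]] := real e _ De oW.
    rewrite EZ lee_fin.
    rewrite EA lte_fin in i1.
    rewrite EyT lee_fin in i2.
    rewrite EyT EyW -EFinD lee_fin in i2'.
    rewrite EyW EW lee_fin in i2''.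
    rewrite EU lte_fin in i3.
    rewrite EWU lee_fin in i4.
    rewrite EW EU EWU EB in mod1; move/(congr1 fine): mod1 => /= mod1.
    rewrite EA EB EAB EAIB in mod2; move/(congr1 fine): mod2 => /= mod2.
    rewrite EZ EU' EZU EZI in mod3; move/(congr1 fine): mod3 => /= mod3.
    rewrite EAIB lee_fin in i5.
    rewrite EAB EZU lee_fin in i6.
    rewrite EU' lee_fin in i7.
    rewrite /eps in eps0 i1 i2 i2' i5 i7 *.
    lra.
  have : ((mx + 2 * eps)%:E <= g e2 N')%E.
    apply/ereal_infP => _ [k _ <-].
    apply: le_trans (key (maxn k N') (leq_maxr _ _)) _.
    have [_ _ _ e2mon _] := dval e2 De2.
    by apply: e2mon; [exact: open_Z|exact: open_Z|exact: Z_dec (leq_maxl _ _)].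
  have : (g e2 N' <= Mx)%E by apply: ereal_sup_ubound; exists (e2, N').
  move=> h1 h2; have := le_trans h2 h1; rewrite Emx lee_fin; lra.
Qed.

End Main.

Lemma mu1 {R : realType} (U : set J) : scott_open leJ U -> (exists x, U x) ->
  @mu_val R J (scott_open leJ) U = 1%E.
Proof. by move=> oU ne; rewrite /mu_val (asboolT oU) (asboolT ne). Qed.

Local Open Scope ring_scope.

Theorem theorem3p13 (R : realType) (theta : set J -> \bar R) (r : R) :
  discrete_val (scott_open leJ) theta ->
  theta setT = (1 - r)%:E ->
  0 < r ->
  ~ minimal_val (scott_open leJ)
      (fun U => (theta U + r%:E * @mu_val R J (scott_open leJ) U)%E).
Proof.
move=> [[[_ th0 _ _ _] _] _] HT r0 Hmin.
have := Hmin (@Cl R) (fun w H => H.1) (@simple_Cl R) (@closure_Cl R).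
move=> [_ [/= H|[_ Ht]]].
  move: H; rewrite HT mu1; [|exact: open_setT|by exists (0%N, None)].
  by rewrite mule1.
have [N HN] := Ht (r / 2) (ltac:(lra)).
move: HN => /=; rewrite mu1; [|exact: open_U|by exists (N, None)].
have := th0 _ (open_U N); case: (theta (Uset N)) => [a| |] //=.
rewrite mule1 -EFinD !lee_fin => h1 h2; exfalso; clear -h1 h2 r0; lra.
Qed.
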